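(* For $\tilde w\in\widetilde W$, $\Phi(G(\tilde w))=\varnothing$ if and only if $\tilde w\in\Omega$, in which case $G(\tilde w)=T$.
   Context: $k$ a finite field, $G=\mathrm{GL}_n$, $T$ the diagonal torus, $B$/$B^-$ the upper/lower triangular Borel. $I\subset\mathrm{GL}_n(k[[s]])$ is the preimage of $B$ under $s\mapsto0$; $I^-=\{g\in\mathrm{GL}_n(k[s^{-1}]):g|_{s^{-1}=0}\in B^-\}$. $\widetilde W$ is the group of monomial matrices $w\,\mathrm{diag}(s^{\lambda_1},\dots,s^{\lambda_n})$ with $w$ a permutation matrix and $\lambda\in\mathbb Z^n$; $\Omega=\{\tilde w\in\widetilde W:\tilde wI\tilde w^{-1}=I\}$. For $\tilde w\in\widetilde W$, $S(\tilde w)=I^-\cap\tilde wI\tilde w^{-1}$, and $G(\tilde w)=\mathrm{ev}_1(S(\tilde w))\subset\mathrm{GL}_n(k)$, where $\mathrm{ev}_1$ is evaluation at $s=1$. For a subgroup $H\subseteq\mathrm{GL}_n$, $\Phi(H)$ is the set of roots $\alpha$ of $\mathrm{GL}_n$ whose root subgroup $U_\alpha$ is contained in $H$. *)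

(* Defs.v *)
From HB Require Import structures.
From mathcomp Require Import all_boot all_order all_algebra all_fingroup.
Set Implicit Arguments. Unset Strict Implicit. Unset Printing Implicit Defensive.
Import GRing.Theory.
Local Open Scope ring_scope.

(* Ambient field: k(s) = {fraction {poly k}}, the variable 'X being s.  All groups
   in the statement (I^-, w I w^-1 for monomial w) meet GL_n(k((s))) inside
   GL_n(k(s)), so we work with k(s)-points. *)
Definition Kf (k : fieldType) := {fraction {poly k}}.

Definition svar (k : fieldType) : Kf k := tofrac 'X.

Definition at_sinv (k : fieldType) (p : {poly k}) : Kf k :=
  (map_poly (fun c : k => tofrac (c%:P)) p).[(svar k)^-1].

(* x lies in k[[s]] (i.e. is regular at s = 0) and its constant term is c *)
Definition reg0_val (k : fieldType) (x : Kf k) (c : k) : Prop :=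
  exists p q : {poly k}, [/\ q.[0] != 0, x = tofrac p / tofrac q & c = p.[0] / q.[0]].

Definition upper_tri (k : fieldType) n (A : 'M[k]_n) : Prop :=
  forall i j : 'I_n, (j < i)%N -> A i j = 0.
Definition lower_tri (k : fieldType) n (A : 'M[k]_n) : Prop :=
  forall i j : 'I_n, (i < j)%N -> A i j = 0.

Definition inB (k : fieldType) n (A : 'M[k]_n) : Prop := upper_tri A /\ A \in unitmx.
Definition inBm (k : fieldType) n (A : 'M[k]_n) : Prop := lower_tri A /\ A \in unitmx.

Definition inI (k : fieldType) n (g : 'M[Kf k]_n) : Prop :=
  exists g0 : 'M[k]_n, (forall i j, reg0_val (g i j) (g0 i j)) /\ inB g0.

(* r : matrix of polynomials in u = s^{-1} representing g in GL_n(k[s^{-1}])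
   with g|_{s^{-1}=0} in B^- *)
Definition Iminus_rep (k : fieldType) n (g : 'M[Kf k]_n) (r : 'M[{poly k}]_n) : Prop :=
  [/\ g = map_mx (@at_sinv k) r, r \in unitmx & inBm (map_mx (horner^~ 0) r)].

Definition inIminus (k : fieldType) n (g : 'M[Kf k]_n) : Prop :=
  exists r, Iminus_rep g r.

Definition affW (k : fieldType) n (sigma : 'S_n) (lam : 'I_n -> int) : 'M[Kf k]_n :=
  perm_mx sigma *m diag_mx (\row_i (svar k) ^ (lam i)).

Definition in_Omega (k : fieldType) n (w : 'M[Kf k]_n) : Prop :=
  forall x : 'M[Kf k]_n, inI (invmx w *m x *m w) <-> inI x.

Definition inS (k : fieldType) n (w g : 'M[Kf k]_n) : Prop :=
  inIminus g /\ inI (invmx w *m g *m w).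

Definition Gw (k : fieldType) n (w : 'M[Kf k]_n) (h : 'M[k]_n) : Prop :=
  exists g r, [/\ inS w g, Iminus_rep g r & h = map_mx (horner^~ 1) r].

(* alpha = e_i - e_j (i <> j) is in Phi(H) iff U_alpha = {1 + c E_ij} ⊆ H *)
Definition Phi (k : fieldType) n (H : 'M[k]_n -> Prop) (a : 'I_n * 'I_n) : Prop :=
  a.1 != a.2 /\ forall c : k, H (1%:M + c *: delta_mx a.1 a.2).

Definition inT (k : fieldType) n (h : 'M[k]_n) : Prop := is_diag_mx h /\ h \in unitmx.

(* Main.v *)
Require Import Defs.
From HB Require Import structures.
From mathcomp Require Import all_boot all_order all_algebra all_fingroup all_field.
From mathcomp Require Import zify.
From Stdlib Require Import ClassicalEpsilon.
Import GRing.Theory.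
Local Open Scope ring_scope.

Section Aux.
Variable k : fieldType.
Local Notation s := (svar k).

Lemma s_neq0 : s != 0.
Proof. by rewrite /svar tofrac_eq0 polyX_eq0. Qed.

Lemma tofrac_sum (I : Type) (r : seq I) (P : pred I) (F : I -> {poly k}) :
  tofrac (\sum_(i <- r | P i) F i) = \sum_(i <- r | P i) (tofrac (F i) : Kf k).
Proof. by apply: (big_morph _ (@tofracD _) (tofrac0 _)). Qed.

Lemma reg0_tofrac (p : {poly k}) : reg0_val (tofrac p) p.[0].
Proof.
exists p, 1; split; first by rewrite hornerC oner_eq0.
  by rewrite tofrac1 divr1.
by rewrite hornerC divr1.
Qed.

Lemma reg0_mul (t : {poly k}) x c : reg0_val x c -> reg0_val (tofrac t * x) (t.[0] * c).
Proof.
case=> p [q [q0 -> ->]]; exists (t * p), q; split => //.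
  by rewrite tofracM mulrA.
by rewrite hornerM mulrA.
Qed.

Lemma reg0_divX x : reg0_val x 0 -> exists c, reg0_val (s^-1 * x) c.
Proof.
case=> p [q [q0 -> /esym]]; move/eqP; rewrite mulf_eq0 invr_eq0 (negbTE q0) orbF => p0.
have /factor_theorem [p' Ep] : root p 0 by [].
exists (p'.[0] / q.[0]), p', q; split => //.
rewrite Ep subr0 tofracM /svar.
have := s_neq0; rewrite /svar => sn.
by rewrite [tofrac p' * _]mulrC -!mulrA (mulKf sn).
Qed.

Lemma reg0_uniq (x : Kf k) c c' : reg0_val x c -> reg0_val x c' -> c = c'.
Proof.
case=> p [q [q0 -> ->]] [p' [q' [q'0 E ->]]].
have qn : q != 0 by apply: contraNneq q0 => ->; rewrite horner0.
have q'n : q' != 0 by apply: contraNneq q'0 => ->; rewrite horner0.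
have H : tofrac (p * q') = tofrac (p' * q) :> Kf k.
  rewrite !tofracM.
  have tq : tofrac q != 0 :> Kf k by rewrite tofrac_eq0.
  have tq' : tofrac q' != 0 :> Kf k by rewrite tofrac_eq0.
  have := congr1 (fun z => z * (tofrac q * tofrac q')) E.
  by rewrite /= mulrA (divfK tq) [tofrac q * _]mulrC mulrA (divfK tq') => ->.
have /eqP : p * q' = p' * q by apply/eqP; rewrite -tofrac_eq H.
move=> /eqP /(congr1 (horner^~ 0)); rewrite !hornerM => H2.
by apply/eqP; rewrite eqr_div // H2.
Qed.

Lemma at_sinvE N (p : {poly k}) : (size p <= N)%N ->
  at_sinv p = \sum_(i < N) tofrac (p`_i)%:P * (s^-1) ^+ i.
Proof.
move=> sp; rewrite /at_sinv (horner_coef_wide _ (leq_trans (size_poly _ _) sp)).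
apply: eq_bigr => i _; rewrite coef_poly.
case: ifP => // /negbT; rewrite -leqNgt => le.
by rewrite nth_default // tofrac0 mul0r.
Qed.

Lemma at_sinvC (c : k) : at_sinv c%:P = tofrac c%:P.
Proof.
by rewrite (@at_sinvE 1) ?size_polyC ?leq_b1 // big_ord1 coefC /= expr0 mulr1.
Qed.

Lemma at_sinvCX (c : k) d : at_sinv (c%:P * 'X^d) = tofrac c%:P * (s^-1) ^+ d.
Proof.
rewrite (@at_sinvE d.+1); last by rewrite mul_polyC (leq_trans (size_scale_leq _ _)) ?size_polyXn.
rewrite big_ord_recr /= big1 ?add0r; last first.
  by move=> i _; rewrite coefCM coefXn /= (ltn_eqF (ltn_ord i)) mulr0 tofrac0 mul0r.
by rewrite coefCM coefXn eqxx mulr1.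
Qed.


Lemma at_sinv_const (p : {poly k}) c : reg0_val (at_sinv p) c -> (size p <= 1)%N.
Proof.
case=> a [b [b0 E _]].
rewrite leqNgt; apply/negP => sp.
set N := size p in sp.
have [d Nd] : exists d, N = d.+2 by exists N.-2; rewrite -!subn1 -subnDA; lia.
pose Q := \sum_(i < d.+2) p`_i *: 'X^(d.+1 - i).
have EQ : s ^+ d.+1 * at_sinv p = tofrac Q.
  rewrite (@at_sinvE d.+2); last by rewrite -/N Nd.
  rewrite mulr_sumr /Q tofrac_sum; apply: eq_bigr => i _.
  rewrite -mul_polyC tofracM tofracXn -/(svar k) mulrCA; congr (_ * _).
  have le : (i <= d.+1)%N by rewrite -ltnS.
  by rewrite -{1}(subnK le) exprD exprVn (mulfK (expf_neq0 _ s_neq0)).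
have Q0 : Q.[0] = p`_d.+1.
  rewrite /Q horner_sum big_ord_recr /= big1 ?add0r.
    by rewrite hornerZ hornerXn subnn expr0 mulr1.
  move=> i _; rewrite hornerZ hornerXn expr0n /=.
  have : (d.+1 - i != 0)%N by rewrite subn_eq0 -ltnNge ltnS; case: i => /= i; rewrite ltnS.
  by move/negbTE => ->; rewrite mulr0.
have bn : b != 0 by apply: contraNneq b0 => ->; rewrite horner0.
have tb : tofrac b != 0 :> Kf k by rewrite tofrac_eq0.
have H : tofrac (Q * b) = tofrac ('X^(d.+1) * a) :> Kf k.
  by rewrite !tofracM -EQ E tofracXn mulrA (divfK tb).
have /eqP := H; rewrite tofrac_eq => /eqP /(congr1 (horner^~ 0)).
rewrite !hornerM Q0 hornerXn expr0n /= mul0r => /eqP; rewrite mulf_eq0 (negbTE b0) orbF.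
have : lead_coef p != 0 by rewrite lead_coef_eq0 -size_poly_eq0 -/N Nd.
by rewrite lead_coefE -/N Nd => /negbTE ->.
Qed.

End Aux.

Section Mx.
Variable k : fieldType.
Local Notation s := (svar k).

Lemma upper_diag_nz n (A : 'M[k]_n) : inB A -> forall i, A i i != 0.
Proof.
case=> up u i.
have tr : is_trig_mx A^T.
  apply/forallP => a; apply/forallP => b; apply/implyP => ab.
  by rewrite mxE up.
move: u; rewrite unitmxE -det_tr det_trig // unitfE => /prodf_neq0 /(_ i isT).
by rewrite mxE.
Qed.

Lemma inI_entries n (y : 'M[Kf k]_n) :
  (forall a b : 'I_n, exists c, [/\ reg0_val (y a b) c, (b < a)%N -> c = 0 & a = b -> c != 0]) ->
  inI y.
Proof.
move=> H.
pose f a b := proj1_sig (constructive_indefinite_description _ (H a b)).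
have Hf a b : [/\ reg0_val (y a b) (f a b), (b < a)%N -> f a b = 0 & a = b -> f a b != 0].
  exact: (proj2_sig (constructive_indefinite_description _ (H a b))).
exists (\matrix_(a, b) f a b); split.
  by move=> a b; rewrite mxE; case: (Hf a b).
split.
  by move=> a b ba; rewrite mxE; case: (Hf a b) => _ ->.
have tr : is_trig_mx (\matrix_(a, b) f a b)^T.
  apply/forallP => a; apply/forallP => b; apply/implyP => ab.
  by rewrite !mxE; case: (Hf b a) => _ ->.
rewrite unitmxE -det_tr det_trig // unitfE; apply/prodf_neq0 => i _.
by rewrite !mxE; case: (Hf i i) => _ _ ->.
Qed.

Lemma transfer n (x y : 'M[Kf k]_n) (f : 'I_n -> 'I_n) (e : 'I_n -> 'I_n -> int) :
  (forall a b, y a b = s ^ (e a b) * x (f a) (f b)) ->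
  (forall a, e a a = 0) ->
  (forall a b, a != b -> (1 <= e a b) \/ (e a b = 0 /\ ((b < a)%N -> (f b < f a)%N))
                         \/ (e a b = -1 /\ (f b < f a)%N /\ (a < b)%N)) ->
  inI x -> inI y.
Proof.
move=> Hy He Hc [x0 [Hx Bx]].
have [up _] := Bx.
apply: inI_entries => a b.
case: (eqVneq a b) => [<-|ne].
  exists (x0 (f a) (f a)); split.
  + by rewrite Hy He expr0z mul1r.
  + by rewrite ltnn.
  + by move=> _; apply: upper_diag_nz.
case: (Hc a b ne) => [C|[[C1 C2]|[C1 [C2 C3]]]].
- case E: (e a b) C => [m|m] C; last by move: C; rewrite /Order.le /=.
  exists ('X^m.[0] * x0 (f a) (f b)); split.
  + by rewrite Hy E -exprnP -tofracXn; apply: reg0_mul.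
  + have m0 : (0 < m)%N by move: C; rewrite lez_nat.
    by move=> _; rewrite hornerXn expr0n eqn0Ngt m0 mul0r.
  + by move=> eab; rewrite eab eqxx in ne.
- exists (x0 (f a) (f b)); split.
  + by rewrite Hy C1 expr0z mul1r.
  + by move=> ba; apply: up; apply: C2.
  + by move=> eab; rewrite eab eqxx in ne.
- have : reg0_val (x (f a) (f b)) 0 by rewrite -(up _ _ C2).
  case/reg0_divX => c Hc'.
  exists c; split.
  + by rewrite Hy C1 exprN1.
  + by move=> ba; lia.
  + by move=> eab; rewrite eab eqxx in ne.
Qed.

End Mx.

Section W.
Variable k : fieldType.
Variable n : nat.
Variable sigma : 'S_n.
Variable lam : 'I_n -> int.
Local Notation s := (svar k).
Local Notation w := (affW k sigma lam).

Lemma affW_unit : w \in unitmx.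
Proof.
rewrite unitmx_mul unitmx_perm /= unitmxE det_diag unitfE; apply/prodf_neq0 => i _.
by rewrite mxE expfz_neq0 // s_neq0.
Qed.

Lemma conjE (x : 'M[Kf k]_n) a b :
  (invmx w *m x *m w) a b = s ^ (lam b - lam a) * x (sigma^-1 a)%g (sigma^-1 b)%g.
Proof.
pose Y : 'M[Kf k]_n := \matrix_(a, b) (s ^ (lam b - lam a) * x (sigma^-1 a)%g (sigma^-1 b)%g).
have E1 : x *m w = w *m Y.
  have -> : x *m w = col_perm sigma^-1 x *m diag_mx (\row_i s ^ (lam i)).
    by rewrite /affW mulmxA col_permE invgK.
  rewrite /affW -mulmxA mul_diag_mx -row_permE mul_mx_diag.
  apply/matrixP => i j; rewrite !mxE permK mulrA -expfzDr ?s_neq0 //.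
  by rewrite addrC subrK mulrC.
by rewrite -mulmxA E1 mulmxA (mulVmx affW_unit) mul1mx mxE.
Qed.


Lemma omega_of_cond :
  (forall a b : 'I_n, a != b -> (1 <= lam b - lam a) \/
      (lam b - lam a = 0 /\ ((b < a)%N -> ((sigma^-1 b)%g < (sigma^-1 a)%g)%N)) \/
      (lam b - lam a = -1 /\ ((sigma^-1 b)%g < (sigma^-1 a)%g)%N /\ (a < b)%N)) ->
  (forall i j : 'I_n, i != j -> (1 <= lam (sigma i) - lam (sigma j)) \/
      (lam (sigma i) - lam (sigma j) = 0 /\ ((j < i)%N -> (sigma j < sigma i)%N)) \/
      (lam (sigma i) - lam (sigma j) = -1 /\ (sigma j < sigma i)%N /\ (i < j)%N)) ->
  in_Omega w.
Proof.
move=> H1 H2 x; split => Hx.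
- apply: (@transfer k n (invmx w *m x *m w) x sigma
     (fun i j => lam (sigma i) - lam (sigma j))) => //.
  + move=> i j; rewrite conjE !permK mulrA -expfzDr ?s_neq0 //.
    by rewrite addrA subrK subrr expr0z mul1r.
  + by move=> a; rewrite subrr.
- apply: (@transfer k n x (invmx w *m x *m w) (fun a => (sigma^-1 a)%g) (fun a b => lam b - lam a)) => //.
  + by move=> a b; exact: conjE.
  + by move=> a; rewrite subrr.
Qed.

Lemma unip (R : comUnitRingType) m (i j : 'I_m) (t : R) :
  i != j -> 1%:M + t *: delta_mx i j \in unitmx.
Proof.
move=> ij.
have [] := @mulmx1_unit _ _ (1%:M + t *: delta_mx i j) (1%:M - t *: delta_mx i j) => //.
rewrite mulmxDl mul1mx mulmxBr mulmx1 -scalemxAl -scalemxAr mul_delta_mx_cond.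
by rewrite eq_sym (negbTE ij) mulr0n !scaler0 subr0 subrK.
Qed.

Lemma horner_nat (m : nat) (x : k) : ((m%:R : {poly k})).[x] = m%:R.
Proof. by rewrite -polyC_natr hornerC. Qed.

Lemma reg0_1 : reg0_val (1 : Kf k) 1.
Proof. by have := @reg0_tofrac k 1; rewrite tofrac1 -polyC1 hornerC. Qed.

Lemma reg0_0 : reg0_val (0 : Kf k) 0.
Proof. by have := @reg0_tofrac k 0; rewrite tofrac0 horner0. Qed.

Lemma witness (a b : 'I_n) (d : nat) : a != b -> (d = 0%N -> ((sigma^-1 b)%g < (sigma^-1 a)%g)%N) ->
  0 <= lam b - lam a - d%:Z -> (lam b - lam a - d%:Z = 0 -> (a < b)%N) ->
  Phi (Gw w) ((sigma^-1 a)%g, (sigma^-1 b)%g).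
Proof.
move=> ab Hd Hpos Hz.
set i := (sigma^-1 a)%g; set j := (sigma^-1 b)%g.
have ij : i != j by apply: contra ab => /eqP /perm_inj ->.
split => //= c.
pose r : 'M[{poly k}]_n := 1%:M + (c%:P * 'X^d) *: delta_mx i j.
have rE p q : r p q = if (p == i) && (q == j) then c%:P * 'X^d else (p == q)%:R.
  rewrite !mxE; case: (p =P i) => [->|np]; case: (q =P j) => [->|nq] /=;
  by rewrite ?(negbTE ij) ?mulr1 ?mulr0 ?add0r ?addr0 ?mulr0n.
have map_r x0 : map_mx (horner^~ x0) r = 1%:M + (c * x0 ^+ d) *: delta_mx i j.
  apply/matrixP => p q; rewrite mxE rE !mxE; case: (p =P i) => [->|np]; case: (q =P j) => [->|nq] /=;
  by rewrite ?hornerCM ?hornerXn ?horner_nat ?(negbTE ij) ?mulr1 ?mulr0 ?addr0 ?add0r ?mulr0n.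
have IR : Iminus_rep (map_mx (@at_sinv k) r) r.
  rewrite /Iminus_rep; split => //.
  - rewrite -[r]/(1%:M + (c%:P * 'X^d) *: delta_mx i j); exact: unip.
  - rewrite map_r /inBm; split; last exact: unip.
    move=> p q pq; rewrite !mxE.
    have -> : (p == q) = false by apply/negbTE; rewrite neq_ltn pq.
    case: (p =P i) => [Ep|]; case: (q =P j) => [Eq|] /=; rewrite ?mulr0 ?addr0 //.
    case: d Hd {map_r rE r Hpos Hz} => [|d'] Hd; last by rewrite expr0n /= mulr0 mul0r addr0.
    have := Hd erefl; rewrite -/i -/j -Ep -Eq; lia.
exists (map_mx (@at_sinv k) r), r.
have gE p q : (map_mx (@at_sinv k) r) p q =
    if (p == i) && (q == j) then tofrac c%:P * (s^-1) ^+ d else (p == q)%:R.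
  rewrite mxE rE; case: ifP => _; first exact: at_sinvCX.
  case: (p == q) => /=.
    by rewrite -polyC1 at_sinvC polyC1 tofrac1.
  by rewrite !mulr0n -polyC0 at_sinvC polyC0 tofrac0.
split.
- rewrite /inS; split; first by exists r.
  apply: inI_entries => a' b'; rewrite conjE gE.
  case H: (((sigma^-1 a')%g == i) && ((sigma^-1 b')%g == j)).
  + move/andP: H => [/eqP Ha /eqP Hb].
    have ea : a' = a by apply: (@perm_inj _ (sigma^-1)%g).
    have eb : b' = b by apply: (@perm_inj _ (sigma^-1)%g).
    subst a' b'.
    have [m Hm] : exists m : nat, lam b - lam a - d%:Z = m%:Z.
      by exists (absz (lam b - lam a - d%:Z)%R); rewrite gez0_abs.
    have -> : s ^ (lam b - lam a) * (tofrac c%:P * s^-1 ^+ d) = tofrac (c%:P * 'X^m).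
      rewrite tofracM tofracXn -/(svar k) mulrCA exprVn exprnN -expfzDr ?s_neq0 //.
      by rewrite Hm -exprnP.
    exists (c%:P * 'X^m).[0]; split.
    * exact: reg0_tofrac.
    * move=> ba; rewrite hornerCM hornerXn expr0n.
      case: m Hm => [|m] Hm /=; last by rewrite mulr0.
      by have := Hz Hm; lia.
    * by move=> e; rewrite e eqxx in ab.
  + case: (eqVneq a' b') => [<-|nab].
    * rewrite eqxx subrr expr0z mul1r; exists 1; split => //.
      - exact: reg0_1.
      - by rewrite ltnn.
      - by rewrite oner_eq0.
    * have -> : ((sigma^-1 a')%g == (sigma^-1 b')%g) = false.
        by apply/negbTE; apply: contra nab => /eqP /perm_inj ->.
      rewrite mulr0; exists 0; split => //.
      - exact: reg0_0.
      - by move=> e; rewrite e eqxx in nab.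
- exact: IR.
- by rewrite map_r expr1n mulr1.
Qed.

End W.

Lemma diag_entry (R : nmodType) m (h : 'M[R]_m) i j : is_diag_mx h -> i != j -> h i j = 0.
Proof. by move/forallP/(_ i)/forallP/(_ j)/implyP => H ne; apply/eqP; apply: H. Qed.

Section W2.
Variable k : fieldType.
Variable n : nat.
Variable sigma : 'S_n.
Variable lam : 'I_n -> int.
Local Notation w := (affW k sigma lam).

Lemma GwT (HO : in_Omega w) h : Gw w h <-> inT h.
Proof.
split.
- case=> g [r [[_ Hi] [Hg ru Hbm] ->]].
  have [g0 [Hreg [Hup Hu]]] := (HO g).1 Hi.
  have Hc i j : r i j = ((r i j)`_0)%:P.
    apply: size1_polyC; apply: (@at_sinv_const _ _ (g0 i j)).
    by have := Hreg i j; rewrite Hg mxE.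
  have Hg0 i j : g0 i j = (r i j)`_0.
    apply: (@reg0_uniq _ _ _ _ (Hreg i j)); rewrite Hg mxE {1}Hc at_sinvC.
    by have := @reg0_tofrac _ ((r i j)`_0)%:P; rewrite hornerC.
  have Eh x : map_mx (horner^~ x) r = g0.
    by apply/matrixP => i j; rewrite mxE {1}Hc hornerC Hg0.
  rewrite Eh; split; last exact: Hu.
  apply/forallP => i; apply/forallP => j; apply/implyP; rewrite neq_ltn => /orP [ij|ji].
  + by case: Hbm => lo _; rewrite -(Eh 0) lo.
  + by rewrite Hup.
- case=> Hd Hu.
  have Eh x : map_mx (horner^~ x) (map_mx polyC h) = h.
    by apply/matrixP => i j; rewrite !mxE hornerC.
  have IR : Iminus_rep (map_mx (fun c => tofrac c%:P) h) (map_mx polyC h).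
    split.
    + by apply/matrixP => i j; rewrite !mxE at_sinvC.
    + move: Hu; rewrite !unitmxE (det_map_mx polyC) unitfE => Hu.
      by rewrite poly_unitE size_polyC Hu coefC /= unitfE Hu.
    + rewrite Eh; split => // i j ij; apply: diag_entry => //.
      by rewrite neq_ltn ij.
  exists (map_mx (fun c => tofrac c%:P) h), (map_mx polyC h); split; [| exact: IR | by rewrite Eh].
  + split; first by exists (map_mx polyC h).
    apply: (HO _).2; exists h; split.
    * by move=> i j; rewrite mxE; have := @reg0_tofrac _ (h i j)%:P; rewrite hornerC.
    * split => // i j ji; apply: diag_entry => //.
      by rewrite neq_ltn ji orbT.
Qed.

End W2.

Theorem lemma8p4 (k : finFieldType) (n : nat) (sigma : 'S_n) (lam : 'I_n -> int) :
  ((forall a : 'I_n * 'I_n, ~ Phi (Gw (affW k sigma lam)) a) <-> in_Omega (affW k sigma lam))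
  /\ (in_Omega (affW k sigma lam) ->
      forall h : 'M[k]_n, Gw (affW k sigma lam) h <-> inT h).
Proof.
split; last exact: GwT.
split.
- move=> NoPhi.
  have W a b (d : nat) : a != b -> ~ ((d = 0%N -> ((sigma^-1 b)%g < (sigma^-1 a)%g)%N) /\
      0 <= lam b - lam a - d%:Z /\ (lam b - lam a - d%:Z = 0 -> (a < b)%N)).
    by move=> ab [H1 [H2 H3]]; exact: (NoPhi _ (@witness k n sigma lam a b d ab H1 H2 H3)).
  apply: omega_of_cond.
  + move=> a b ab.
    have ba : b != a by rewrite eq_sym.
    have n1 : (a : nat) <> b by move=> /val_inj E; rewrite E eqxx in ab.
    have n2 : ((sigma^-1 a)%g : nat) <> (sigma^-1 b)%g.
      by move=> /val_inj /perm_inj E; rewrite E eqxx in ab.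
    have := W a b 0%N ab; have := W a b 1%N ab; have := W b a 0%N ba; have := W b a 1%N ba.
    lia.
  + move=> i j ij.
    have ab : sigma i != sigma j by rewrite (inj_eq perm_inj).
    have ba : sigma j != sigma i by rewrite eq_sym.
    have := W _ _ 0%N ab; have := W _ _ 1%N ab; have := W _ _ 0%N ba; have := W _ _ 1%N ba.
    have n1 : (i : nat) <> j by move=> /val_inj E; rewrite E eqxx in ij.
    have n2 : (sigma i : nat) <> sigma j by move=> /val_inj E; rewrite E eqxx in ab.
    rewrite !permK; lia.
- move=> HO [p q] [/= pq HP].
  have [Hd _] := (@GwT k n sigma lam HO _).1 (HP 1).
  have := @diag_entry _ _ _ _ _ Hd pq.
  by rewrite !mxE !eqxx (negbTE pq) /= mulr1n mulr0n mul1r add0r => /eqP; rewrite oner_eq0.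
Qed.
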